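(* Let $G$ be a map graph with a corresponding planar bipartite graph $B$, let $k$ be a positive integer, let $\mathcal{D}=(T,\beta_{\mathcal{D}})$ be a nice tree decomposition of $B$ of width less than $5\sqrt{2k}$, and let $\mathcal{D}'=(T,\beta_{\mathcal{D}'})$ be the tree decomposition of $G$ derived from $\mathcal{D}$. Let $C$ be a cycle in $G$. Then there is a cycle $C'$ in $G$ of the same length as $C$ such that for every node $t\in V(T)$, the number of edges of $C'$ with one endpoint in $\beta_{\mathcal{D}'}(t)$ and the other in $V(G)\setminus\gamma_{\mathcal{D}'}(t)$ is at most $20\sqrt{2k}$.
   Context: All graphs are finite and simple. For a bipartite graph $B$ with bipartition $V(B)=W\uplus U$, the half-square of $B$ is the graph on $W$ in which two vertices are adjacent iff they are at distance exactly $2$ in $B$. A graph $G$ is a map graph iff it is the half-square of some planar bipartite graph $B$; such $B$ (with $W=V(G)$) is a corresponding planar bipartite graph, and $S(G)=U$ is the set of special vertices. A tree decomposition $(T,\beta)$: rooted tree, bags covering all vertices and edges, each vertex's nodes inducing a connected subtree; width is max bag size minus one. $\gamma_{\mathcal{D}}(t)$ (resp. $\gamma_{\mathcal{D}'}(t)$) is the union of bags at $t$ and its descendants. A nice tree decomposition has empty root bag and leaf, introduce, forget and join nodes in the standard sense. The decomposition derived from $\mathcal{D}$ has the same tree and bags $\beta_{\mathcal{D}'}(t)=(\beta_{\mathcal{D}}(t)\cap V(G))\cup\bigcup_{s\in\beta_{\mathcal{D}}(t)\cap S(G)}(N_B(s)\cap\gamma_{\mathcal{D}}(t))$. *)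

(* Defs.v *)
From HB Require Import structures.
From mathcomp Require Import all_boot all_order all_algebra.
From mathcomp Require Import all_classical all_reals all_analysis.
Set Implicit Arguments. Unset Strict Implicit. Unset Printing Implicit Defensive.
Import Order.TTheory GRing.Theory Num.Theory numFieldNormedType.Exports.
Local Open Scope ring_scope.

Definition simple_graph (V : finType) (e : rel V) : Prop :=
  symmetric e /\ irreflexive e.

Definition bipE (W U : finType) (r : W -> U -> bool) : rel (W + U)%type :=
  fun a b => match a, b with
             | inl w, inr u => r w u
             | inr u, inl w => r w u
             | _, _ => false
             end.

Definition dist2 (V : finType) (e : rel V) (x y : V) : bool :=
  [&& x != y, ~~ e x y & [exists z, e x z && e z y]].

Definition half_square (W U : finType) (r : W -> U -> bool) : rel W :=
  fun x y => dist2 (bipE r) (inl x) (inl y).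

(** G is the map graph whose corresponding bipartite graph is B = (W ⊎ U, r). *)
Definition is_half_square_of (W U : finType) (G : rel W) (r : W -> U -> bool) :=
  forall x y, G x y = half_square r x y.

(** * Planarity: a drawing in the plane R^2 with vertices as distinct points
    and edges as arcs (injective continuous images of [0,1], parametrised by
    continuous maps R -> R^2 restricted to [0,1]) joining their endpoints,
    whose interiors avoid all vertex points and the interiors of other arcs. *)
Definition unit_int (R : realType) (s : R) : Prop := 0 <= s <= 1.
Definition open_unit_int (R : realType) (s : R) : Prop := 0 < s < 1.

Definition planar (R : realType) (V : finType) (e : rel V) : Prop :=
  exists (p : V -> R * R) (arc : V -> V -> R -> R * R),
    [/\ injective p,
        (forall x y, e x y ->
           [/\ continuous (arc x y),
               arc x y 0 = p x, arc x y 1 = p y,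
               (forall s t, unit_int s -> unit_int t -> arc x y s = arc x y t -> s = t)
             & (forall s, arc y x s = arc x y (1 - s))]),
        (forall x y z s, e x y -> open_unit_int s -> arc x y s <> p z)
      & (forall x y x' y' s t, e x y -> e x' y' ->
           ~ ((x = x' /\ y = y') \/ (x = y' /\ y = x')) ->
           open_unit_int s -> open_unit_int t -> arc x y s <> arc x' y' t)].

Definition parent_rel (N : finType) (root : N) (par : N -> N) : rel N :=
  fun a b => (a != root) && (par a == b).

Definition rooted_tree (N : finType) (root : N) (par : N -> N) : Prop :=
  par root = root /\ forall t, connect (parent_rel root par) t root.

(** s is a descendant of t (t itself included). *)
Definition descendant (N : finType) (root : N) (par : N -> N) (s t : N) : bool :=
  connect (parent_rel root par) s t.

Definition tree_adj (N : finType) (root : N) (par : N -> N) : rel N :=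
  fun a b => parent_rel root par a b || parent_rel root par b a.

Definition children (N : finType) (root : N) (par : N -> N) (t : N) : {set N} :=
  [set s | parent_rel root par s t].

Definition tree_decomposition (V N : finType) (e : rel V)
    (root : N) (par : N -> N) (beta : N -> {set V}) : Prop :=
  [/\ rooted_tree root par,
      (forall v, exists t, v \in beta t),
      (forall x y, e x y -> exists t, (x \in beta t) && (y \in beta t))
    & (forall v s t, v \in beta s -> v \in beta t ->
         connect [rel a b | [&& tree_adj root par a b, v \in beta a & v \in beta b]] s t)].

Definition gamma (V N : finType) (root : N) (par : N -> N) (beta : N -> {set V})
    (t : N) : {set V} :=
  \bigcup_(s | descendant root par s t) beta s.

Definition td_width (V N : finType) (beta : N -> {set V}) : int :=
  (\max_(t : N) #|beta t|)%:Z - 1.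

Definition nice_td (V N : finType) (e : rel V)
    (root : N) (par : N -> N) (beta : N -> {set V}) : Prop :=
  [/\ tree_decomposition e root par beta,
      beta root = finset.set0
    & forall t,
      [\/ children root par t = finset.set0 /\ beta t = finset.set0,
          exists s v, [/\ children root par t = [set s], v \notin beta s
                        & beta t = v |: beta s],
          exists s v, [/\ children root par t = [set s], v \in beta s
                        & beta t = beta s :\ v]
        | exists s1 s2, [/\ s1 != s2, children root par t = [set s1; s2],
                           beta t = beta s1 & beta t = beta s2]]].

Definition derived_bag (W U N : finType) (r : W -> U -> bool)
    (root : N) (par : N -> N) (beta : N -> {set (W + U)%type}) (t : N) : {set W} :=
  [set w | inl w \in beta t] :|:
  [set w | [exists u, [&& inr u \in beta t, r w u & inl w \in gamma root par beta t]]].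

(** A cycle in a graph: a duplicate-free cyclic sequence of >= 3 vertices,
    consecutive ones adjacent; its length is its size. *)
Definition is_cycle (V : finType) (e : rel V) (c : seq V) : bool :=
  (2 < size c)%N && ucycleb e c.

Definition crossing_edges (V : finType) (c : seq V) (A Bset : {set V}) : nat :=
  count (fun x => ((x \in A) && (next c x \notin Bset))
                  || ((next c x \in A) && (x \notin Bset))) c.

(* Main.v *)
Require Import Defs.
From HB Require Import structures.
From mathcomp Require Import all_boot all_order all_algebra.
From mathcomp Require Import all_classical all_reals all_analysis.
Import Order.TTheory GRing.Theory Num.Theory.
Local Open Scope ring_scope.
From mathcomp Require Import zify lra.
Local Open Scope nat_scope.

Section Pc.
Variable T : eqType.
Variable phi : T -> T -> nat.
Hypothesis phiC : forall x y, phi x y = phi y x.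
Fixpoint pc (a : T) (s : seq T) : nat := if s is b :: s' then phi a b + pc b s' else 0.
Definition psi (c : seq T) := \sum_(x <- c) phi x (next c x).

Lemma pc_cat a s1 s2 : pc a (s1 ++ s2) = pc a s1 + pc (last a s1) s2.
Proof. by elim: s1 a => [|b s IH] a //=; rewrite IH addnA. Qed.

Lemma pc_rev a s b : pc a (rcons s b) = pc b (rcons (rev s) a).
Proof.
elim: s a => [|z s IH] a /=; first by rewrite phiC.
rewrite IH rev_cons -[in RHS]cats1 pc_cat last_rcons /= addn0.
by rewrite addnC phiC.
Qed.

Lemma zip_pc a s e : \sum_(pr <- zip (a :: s) (rcons s e)) phi pr.1 pr.2 = pc a (rcons s e).
Proof.
elim: s a => [|b s IH] a /=; first by rewrite big_cons big_nil.
by rewrite big_cons /= IH.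
Qed.

Lemma map_pair (f : T -> T) (s : seq T) : map (fun x => (x, f x)) s = zip s (map f s).
Proof. by elim: s => //= x s ->. Qed.
Lemma map_next (c : seq T) : uniq c -> map (next c) c = rot 1 c.
Proof.
case: c => // a s Uc.
apply: (@eq_from_nth _ a); first by rewrite size_map size_rot.
move=> i; rewrite size_map => lti.
rewrite (nth_map a) // next_nth mem_nth // index_uniq // rot1_cons nth_rcons.
case: ltngtP => // [|->]; last by rewrite nth_default.
by move=> H; move: lti; rewrite /= ltnS leqNgt H.
Qed.
Lemma next_mid (u : seq T) x z v : uniq (u ++ x :: z :: v) -> next (u ++ x :: z :: v) x = z.
Proof.
case: u => [|a u]; first by rewrite /= eqxx.
move=> Uc; rewrite next_nth mem_cat !inE eqxx !orbT /=.
move: Uc; rewrite /= => /andP[ax U].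
have xu : x \notin u by move: U; rewrite cat_uniq /= => /and3P[_ /norP[] ].
have xa : x != a by apply: contraNneq ax => ->; rewrite mem_cat !inE eqxx orbT.
rewrite eq_sym (negbTE xa) /= index_cat (negbTE xu) /= eqxx addn0.
by rewrite nth_cat ltnNge leqnSn /= subSnn.
Qed.
Lemma next_last (a : T) u x : uniq (a :: u ++ [:: x]) -> next (a :: u ++ [:: x]) x = a.
Proof.
move=> Uc; rewrite next_nth (_ : x \in _); last by rewrite inE mem_cat inE eqxx !orbT.
move: Uc; rewrite /= => /andP[ax U].
have xu : x \notin u by move: U; rewrite cat_uniq /= => /and3P[_ /norP[] ].
have xa : x != a by apply: contraNneq ax => ->; rewrite mem_cat !inE eqxx orbT.
rewrite eq_sym (negbTE xa) /= index_cat (negbTE xu) /= eqxx addn0 nth_default //.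
by rewrite size_cat /= addn1.
Qed.
Lemma psi_cons a s : uniq (a :: s) -> psi (a :: s) = pc a (rcons s a).
Proof.
move=> U; rewrite /psi -(big_map (fun x => (x, next (a :: s) x)) predT (fun pr => phi pr.1 pr.2)).
by rewrite map_pair map_next // rot1_cons zip_pc.
Qed.

Lemma psi_rot n c : uniq c -> psi (rot n c) = psi c.
Proof.
move=> U; rewrite /psi (eq_bigr (fun x => phi x (next c x))); last by move=> x _; rewrite next_rot.
by apply: perm_big; rewrite perm_rot.
Qed.

Lemma natperm (A B C D E F : nat) : A + (B + (C + (D + (E + F)))) = A + (D + (C + (B + (E + F)))).
Proof. lia. Qed.

Lemma natperm2 (A P B Q C D : nat) : A + (P + (B + Q)) + C + D = C + (P + (D + Q)) + A + B.
Proof. lia. Qed.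

Lemma path_rev_sym (G : rel T) (symG : symmetric G) a p b :
  path G a (rcons p b) -> path G b (rcons (rev p) a).
Proof.
move=> H; have := rev_path G a (rcons p b).
rewrite last_rcons belast_rcons rev_cons => ->.
by rewrite (eq_path (e' := G)) // => x y; rewrite /= symG.
Qed.

Lemma move_lemma (G : rel T) (symG : symmetric G) c x1 x2 :
  uniq c -> cycle G c -> x1 \in c -> x2 \in c -> x1 != x2 ->
  next c x1 != x2 -> next c x2 != x1 -> G x1 x2 -> G (next c x1) (next c x2) ->
  exists c2, [/\ uniq c2, cycle G c2, size c2 = size c &
     psi c2 + phi x1 (next c x1) + phi x2 (next c x2) =
     psi c + phi x1 x2 + phi (next c x1) (next c x2)].
Proof.
move=> Uc Cc x1c x2c x12.
case: (rot_to x1c) => i s E.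
have nE : next c =1 next (x1 :: s) by move=> y; rewrite -E next_rot.
rewrite !nE -(@psi_rot i c Uc) -(size_rot i) E.
rewrite -(rot_uniq i) E in Uc; rewrite -(rot_cycle i) E in Cc.
have x2s : x2 \in x1 :: s by rewrite -E mem_rot.
case: s E nE Uc Cc x2s => [|y1 s'] E nE Uc Cc x2s.
  by move: x2s; rewrite inE eq_sym (negbTE x12).
have -> : next (x1 :: y1 :: s') x1 = y1 by rewrite /= eqxx.
move=> y1x2.
have x2s' : x2 \in s'.
  by move: x2s; rewrite !inE eq_sym (negbTE x12) /= eq_sym (negbTE y1x2).
case/splitPr: x2s' E nE Uc Cc x2s => p s'' E nE Uc Cc x2s.
case: s'' E nE Uc Cc x2s => [|y2 q] E nE Uc Cc x2s.
  by rewrite (@next_last x1 (y1 :: p) x2 Uc) eqxx.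
rewrite (@next_mid (x1 :: y1 :: p)) // => y2x1 Gx Gy.
have Ep : forall l, rcons (y1 :: p ++ x2 :: y2 :: q) l = y1 :: (rcons p x2 ++ y2 :: rcons q l).
  by move=> l; rewrite /= rcons_cat -[rcons p x2]cats1 -catA.
have Ep2 : forall l, rcons (x2 :: rev p ++ y1 :: y2 :: q) l = x2 :: (rcons (rev p) y1 ++ y2 :: rcons q l).
  by move=> l; rewrite /= rcons_cat -[rcons (rev p) y1]cats1 -catA.
move: Cc; rewrite /cycle Ep /= cat_path last_rcons /= => /and4P[G1 P1 G2 P2].
have Hperm : perm_eq (x1 :: x2 :: rev p ++ y1 :: y2 :: q) (x1 :: y1 :: p ++ x2 :: y2 :: q).
  apply/permP => a; rewrite /= !count_cat /= count_rev; exact: natperm.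
exists (x1 :: x2 :: rev p ++ y1 :: y2 :: q).
split.
- by rewrite (perm_uniq Hperm).
- by rewrite /cycle Ep2 /= cat_path last_rcons /= Gx Gy P2 (@path_rev_sym G symG _ _ _ P1).
- by rewrite /= !size_cat /= size_rev.
rewrite psi_cons ?(perm_uniq Hperm) // psi_cons // Ep Ep2 /= !pc_cat !last_rcons /=.
rewrite (pc_rev y1 p x2); exact: natperm2.
Qed.
End Pc.
Arguments psi {T} phi c.
Section Tree.
Variables (N : finType) (root : N) (par : N -> N).
Local Notation prel := (parent_rel root par).
Local Notation desc := (descendant root par).

Lemma desc_boundary a b t : desc a t -> ~~ desc b t -> tree_adj root par a b -> a = t.
Proof.
move=> Hat Hbt /orP[] /andP[nr /eqP pa].
  case/connectP: Hat => [[|z p]] /= Pp Et //.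
  case/andP: Pp => /andP[_ /eqP pz] Pp.
  case/negP: Hbt; rewrite -pa pz; apply/connectP; by exists p.
case/negP: Hbt; apply: connect_trans Hat; apply: connect1.
by rewrite /parent_rel nr pa eqxx.
Qed.

Lemma sep_path (V : finType) (beta : N -> {set V}) v a b t :
  connect [rel x y | [&& tree_adj root par x y, v \in beta x & v \in beta y]] a b ->
  desc a t -> ~~ desc b t -> v \in beta t.
Proof.
case/connectP=> p; elim: p a => [|z p IH] a /=; first by move=> _ -> H /negP[].
case/andP=> /and3P[adj va vz] Pp Eb Hat Hbt.
case Hzt: (desc z t); first exact: (IH z Pp Eb Hzt Hbt).
by rewrite -(@desc_boundary a z t Hat (negbT Hzt) adj).
Qed.

Lemma desc_chain a t t' : desc a t -> desc a t' -> desc t t' || desc t' t.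
Proof.
case/connectP=> p; elim: p a t' => [|z p IH] a t' /=.
  by move=> _ -> ->.
case/andP=> /andP[nr /eqP pz] Pp Et.
case/connectP=> [[|z' p']] /= Pp'.
  move=> ->; apply/orP; right; apply/connectP; exists (z :: p) => //=.
  by rewrite Pp andbT /parent_rel nr pz eqxx.
move=> Et'; case/andP: Pp' => /andP[_ /eqP pz'] Pp'.
have ez : z' = z by rewrite -pz' pz.
by apply: (IH z t' Pp Et); apply/connectP; exists p'; rewrite -ez.
Qed.
End Tree.
Arguments desc_chain {N root par a t t'}.
Lemma count_or (T : eqType) (a b : pred T) s :
  (count (fun x => a x || b x) s <= count a s + count b s)%N.
Proof. rewrite -count_predUI; exact: leq_addr. Qed.

Lemma count_le_card (T : finType) (A : {set T}) s :
  uniq s -> (count (fun x => x \in A) s <= #|A|)%N.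
Proof.
move=> Us; rewrite -size_filter cardE; apply: uniq_leq_size; first exact: filter_uniq.
by move=> x; rewrite mem_filter mem_enum => /andP[].
Qed.

Lemma count_inj_bound (T V : finType) (s : seq T) (P : pred T) (f : T -> option V) (B : {set V}) :
  uniq s -> (forall x, x \in s -> P x -> exists2 u, f x = Some u & u \in B) ->
  {in [seq x <- s | P x] &, injective f} -> (count P s <= #|B|)%N.
Proof.
move=> Us Hf Hinj; rewrite -size_filter cardE -(size_map f [seq x <- s | P x]) -(size_map (@Some V) (enum B)).
apply: uniq_leq_size; first by rewrite map_inj_in_uniq // filter_uniq.
move=> y /mapP[x]; rewrite mem_filter => /andP[Px xs] ->.
case: (Hf x xs Px) => u -> uB; apply: map_f; by rewrite mem_enum.
Qed.

Lemma card_split (W U : finType) (S : {set (W + U)%type}) :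
  (#|[set w | inl w \in S]| + #|[set u | inr u \in S]| <= #|S|)%N.
Proof.
rewrite -(card_imset _ (@inl_inj W U)) -(card_imset _ (@inr_inj W U)) -cardsUI.
have -> : (inl @: [set w | inl w \in S]) :&: (inr @: [set u | inr u \in S]) = finset.set0.
  apply/setP => z; rewrite !inE; apply/negP => /andP[/imsetP[w _ ->] /imsetP[u _]] //.
rewrite cards0 addn0; apply: subset_leq_card; apply/fintype.subsetP => z.
by rewrite inE => /orP[] /imsetP[w]; rewrite inE => H ->.
Qed.

Lemma arith_fin (a b d A B S : nat) : (a <= A)%N -> (b <= B)%N -> (d <= B)%N -> (A + B <= S)%N ->
  (a + a + (b + d) <= 2 * S)%N.
Proof. lia. Qed.

Section Main.
Variables (W U N : finType) (G : rel W) (r : W -> U -> bool)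
  (root : N) (par : N -> N) (beta : N -> {set (W + U)%type}).
Hypothesis Gsym : symmetric G.
Hypothesis Girr : irreflexive G.
Hypothesis Hhs : is_half_square_of G r.
Hypothesis Htd : tree_decomposition (bipE r) root par beta.
Local Notation desc := (descendant root par).
Local Notation gam := (gamma root par beta).

Definition Xs t : {set W} := [set w | inl w \in gam t].
Definition pt (v : W) : N := odflt root [pick t | inl v \in beta t].

Lemma pt_in v : inl v \in beta (pt v).
Proof.
rewrite /pt; case: pickP => [t //|H].
case: Htd => _ cov _ _; case: (cov (inl v)) => t vt.
by move: (H t); rewrite vt.
Qed.

Lemma gamP x t : reflect (exists2 s, desc s t & x \in beta s) (x \in gam t).
Proof.
rewrite /gamma; apply: (iffP bigcupP) => [[s ? ?]|[s ? ?]]; by exists s.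
Qed.

Lemma sep v a b t : v \in beta a -> v \in beta b -> desc a t -> ~~ desc b t -> v \in beta t.
Proof.
move=> va vb; case: Htd => _ _ _ con.
exact: (@sep_path N root par _ beta v a b t (con v a b va vb)).
Qed.
Arguments sep {v a b t}.

Lemma pt_desc x t : x \in Xs t -> inl x \notin beta t -> desc (pt x) t.
Proof.
rewrite inE => /gamP[s st xs] xt; apply/negPn/negP => H.
by case/negP: xt; apply: (sep xs (pt_in x) st H).
Qed.
Arguments pt_desc {x t}.

Lemma pt_ndesc y t : y \notin Xs t -> ~~ desc (pt y) t.
Proof.
rewrite inE; apply: contra => H; apply/gamP; exists (pt y) => //; exact: pt_in.
Qed.
Arguments pt_ndesc {y t}.

Lemma wit_in a b u t : a \in Xs t -> inl a \notin beta t -> b \notin Xs t ->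
  r a u -> r b u -> inr u \in beta t.
Proof.
move=> aX at' bX ra rb.
case: Htd => _ _ cove _.
case: (cove (inl a) (inr u) ra) => t1 /andP[at1 ut1].
case: (cove (inl b) (inr u) rb) => t2 /andP[bt2 ut2].
move: (aX); rewrite inE => /gamP[s st as'].
have t1t : desc t1 t.
  by apply/negPn/negP => H; case/negP: at'; apply: (sep as' at1 st H).
have t2t : ~~ desc t2 t.
  by apply/negP => H; case/negP: bX; rewrite inE; apply/gamP; exists t2.
exact: (sep ut1 ut2 t1t t2t).
Qed.
Arguments wit_in {a b u t}.


Lemma half_wit x y : G x y -> exists u, r x u && r y u.
Proof.
rewrite Hhs /half_square /dist2 => /and3P[_ _ /existsP[z]].
by case: z => [w|u] //= H; exists u.
Qed.
Arguments half_wit {x y}.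

Lemma wit_half x y u : x != y -> r x u -> r y u -> G x y.
Proof.
move=> xy rx ry; rewrite Hhs /half_square /dist2 /=.
rewrite (inj_eq (@inl_inj _ _)) xy /=; apply/existsP; exists (inr u) => /=.
by rewrite rx ry.
Qed.
Arguments wit_half {x y u}.

Definition phi (x y : W) : nat := \sum_(t' : N) ((desc (pt x) t') != (desc (pt y) t') : nat).

Lemma phiC x y : phi x y = phi y x.
Proof. by apply: eq_bigr => t' _; rewrite eq_sym. Qed.

Lemma bool4 (a1 a2 b1 b2 : bool) : ~~ [&& a1 == b1, a2 == b2 & a1 != a2] ->
  ((a1 != a2) + (b1 != b2) <= (a1 != b1) + (a2 != b2))%N.
Proof. by case: a1; case: a2; case: b1; case: b2. Qed.

Lemma fourpoint u1 u2 v1 v2 t :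
  desc (pt u1) t -> desc (pt u2) t -> ~~ desc (pt v1) t -> ~~ desc (pt v2) t ->
  (phi u1 u2 + phi v1 v2 < phi u1 v1 + phi u2 v2)%N.
Proof.
move=> h1 h2 h3 h4; rewrite /phi -!big_split /=.
rewrite (bigD1 t) //= [X in (_ < X)%N](bigD1 t) //= h1 h2 (negbTE h3) (negbTE h4) /=.
rewrite !add0n -addnA add1n ltnS; apply: (leq_trans _ (leq_addl 1 _)).
apply: leq_sum => t' _; apply: bool4.
apply/negP => /and3P[/eqP e1 /eqP e2 d].
case A1: (desc (pt u1) t').
  case/orP: (desc_chain h1 A1) => H.
  - by move: d; rewrite A1 (connect_trans h2 H : desc (pt u2) t').
  - have V1 : desc (pt v1) t' by rewrite -e1 A1.
    by case/negP: h3; exact: (connect_trans V1 H).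
have A2 : desc (pt u2) t' by move: d; rewrite A1; case: (desc (pt u2) t').
case/orP: (desc_chain h2 A2) => H.
- by move: A1; rewrite (connect_trans h1 H : desc (pt u1) t').
- have V2 : desc (pt v2) t' by rewrite -e2 A2.
  by case/negP: h4; exact: (connect_trans V2 H).
Qed.
Arguments fourpoint {u1 u2 v1 v2 t}.


Lemma arith_contra (P2 P1 a b c d : nat) :
  P2 + a + b = P1 + c + d -> (c + d < a + b)%N -> (P1 <= P2)%N -> False.
Proof. lia. Qed.

Lemma no_double c' t x1 x2 u :
  is_cycle G c' ->
  (forall c2, is_cycle G c2 -> size c2 = size c' -> (psi phi c' <= psi phi c2)%N) ->
  x1 \in c' -> x2 \in c' -> x1 != x2 ->
  r x1 u -> r (next c' x1) u -> r x2 u -> r (next c' x2) u ->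
  [&& desc (pt x1) t, desc (pt x2) t, ~~ desc (pt (next c' x1)) t & ~~ desc (pt (next c' x2)) t] ||
  [&& ~~ desc (pt x1) t, ~~ desc (pt x2) t, desc (pt (next c' x1)) t & desc (pt (next c' x2)) t] ->
  False.
Proof.
move=> /andP[sz /andP[Cc Uc]] Hmin x1c x2c x12 r1 r1' r2 r2' Hd.
set y1 := next c' x1 in r1' Hd *; set y2 := next c' x2 in r2' Hd *.
have y12 : y1 != y2.
  apply: contra x12 => /eqP e.
  by rewrite -(prev_next Uc x1) -/y1 e /y2 prev_next.
have y1x2 : y1 != x2.
  apply/eqP => e; move: Hd; rewrite e.
  by case: (desc (pt x2) t); rewrite /= ?andbF ?andbT.
have y2x1 : y2 != x1.
  apply/eqP => e; move: Hd; rewrite e.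
  by case: (desc (pt x1) t); rewrite /= ?andbF ?andbT.
have Gx := wit_half x12 r1 r2.
have Gy := wit_half y12 r1' r2'.
have [c2 [U2 C2 S2 E2]] := @move_lemma _ phi phiC G Gsym c' x1 x2 Uc Cc x1c x2c x12 y1x2 y2x1 Gx Gy.
have Hle := Hmin c2 (introT andP (conj (eq_ind_r (fun n => (2 < n)%N) sz S2) (introT andP (conj C2 U2)))) S2.
apply: (@arith_contra _ _ _ _ _ _ E2 _ Hle).
case/orP: Hd => /and4P[h1 h2 h3 h4].
  exact: (fourpoint h1 h2 h3 h4).
rewrite [X in (X < _)%N]addnC (phiC x1 y1) (phiC x2 y2).
exact: (fourpoint h3 h4 h1 h2).
Qed.

Local Notation dbag := (derived_bag r root par beta).

Lemma Bg_X t x : (x \in gamma root par dbag t) = (x \in Xs t).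
Proof.
apply/idP/idP.
  case/bigcupP => s st; rewrite !inE => /orP[H | /existsP[u /and3P[_ _ H]]]; apply/gamP.
    by exists s.
  by case/gamP: H => s' s's H'; exists s' => //; exact: connect_trans s's st.
rewrite inE => /gamP[s st H]; apply/bigcupP; exists s => //; by rewrite !inE H.
Qed.

Lemma A_X t x : x \in dbag t -> x \in Xs t.
Proof. by move=> H; rewrite -Bg_X; apply/bigcupP; exists t => //; exact: connect0. Qed.

Definition wf (c' : seq W) t x := [pick u | [&& inr u \in beta t, r x u & r (next c' x) u]].

Lemma wf_some c' t x u : r x u -> r (next c' x) u -> inr u \in beta t ->
  exists2 u', wf c' t x = Some u' & [&& inr u' \in beta t, r x u' & r (next c' x) u'].
Proof.
move=> h1 h2 h3; rewrite /wf; case: pickP => [u' H|H]; first by exists u'.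
by move: (H u); rewrite h1 h2 h3.
Qed.
Arguments wf_some {c' t x u}.

Lemma wf_prop c' t x u : wf c' t x = Some u -> [&& inr u \in beta t, r x u & r (next c' x) u].
Proof. by rewrite /wf; case: pickP => // u' H [<-]. Qed.
Arguments wf_prop {c' t x u}.

Lemma count_bound (c c' : seq W) t :
  is_cycle G c' -> size c' = size c ->
  (forall c2, is_cycle G c2 -> size c2 = size c -> (psi phi c' <= psi phi c2)%N) ->
  (crossing_edges c' (dbag t) (gamma root par dbag t) <= 2 * #|beta t|)%N.
Proof.
move=> Hc Sc Hmin.
have Hmin' : forall c2, is_cycle G c2 -> size c2 = size c' -> (psi phi c' <= psi phi c2)%N.
  by move=> c2 H1 H2; apply: Hmin; rewrite // H2.
have /andP[sz /andP[Cc Uc]] := Hc.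
set n := next c'.
pose Q1 := fun x => inl x \in beta t.
pose Q2 := fun x => inl (n x) \in beta t.
pose Q3 := fun x => [&& x \in Xs t, n x \notin Xs t & inl x \notin beta t].
pose Q4 := fun x => [&& n x \in Xs t, x \notin Xs t & inl (n x) \notin beta t].
have step1 : (crossing_edges c' (dbag t) (gamma root par dbag t) <=
   count (fun x => (Q1 x || Q2 x) || (Q3 x || Q4 x)) c')%N.
  apply: sub_count => x /=; rewrite !Bg_X /Q1 /Q2 /Q3 /Q4 /n.
  case/orP => /andP[/A_X H1 H2].
    by rewrite H1 H2 /=; case: (inl x \in beta t); rewrite /= ?orbT.
  by rewrite H1 H2 /=; case: (inl (next c' x) \in beta t); rewrite ?orbT.
apply: (leq_trans step1); apply: (leq_trans (@count_or _ (fun x => Q1 x || Q2 x) (fun x => Q3 x || Q4 x) c')).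
have c1 : (count Q1 c' <= #|[set w | inl w \in beta t]|)%N.
  by rewrite -(eq_count (a1 := fun x => x \in [set w | inl w \in beta t])) ?count_le_card // => x; rewrite inE.
have c2 : count Q2 c' = count Q1 c'.
  rewrite /Q2 -[LHS](count_map n Q1) /n map_next //.
  by apply/permP; rewrite perm_rot perm_refl.
have ex3 : forall x, x \in c' -> Q3 x -> exists2 u, wf c' t x = Some u & inr u \in beta t.
  move=> x xc /and3P[xX nX xb].
  case: (half_wit (next_cycle Cc xc)) => u /andP[ru rn].
  have ub := wit_in xX xb nX ru rn.
  by case: (wf_some ru rn ub) => u' -> /and3P[u'b _ _]; exists u'.
have ex4 : forall x, x \in c' -> Q4 x -> exists2 u, wf c' t x = Some u & inr u \in beta t.
  move=> x xc /and3P[nX xX nb].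
  case: (half_wit (next_cycle Cc xc)) => u /andP[ru rn].
  have ub := wit_in nX nb xX rn ru.
  by case: (wf_some ru rn ub) => u' -> /and3P[u'b _ _]; exists u'.
have c3 : (count Q3 c' <= #|[set u | inr u \in beta t]|)%N.
  apply: (@count_inj_bound _ _ c' Q3 (wf c' t) _ Uc).
    by move=> x xc q; case: (ex3 x xc q) => u -> ub; exists u; rewrite ?inE.
  move=> x1 x2; rewrite !mem_filter => /andP[q1 x1c] /andP[q2 x2c] Hf.
  case: (eqVneq x1 x2) => // x12; exfalso.
  case: (ex3 x1 x1c q1) => u1 E1 _; rewrite E1 in Hf.
  have /and3P[_ r1 r1'] := wf_prop E1.
  have /and3P[_ r2 r2'] := wf_prop (esym Hf).
  case/and3P: q1 => x1X n1X x1b; case/and3P: q2 => x2X n2X x2b.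
  apply: (@no_double c' t x1 x2 u1 Hc Hmin' x1c x2c x12 r1 r1' r2 r2').
  by rewrite (pt_desc x1X x1b) (pt_desc x2X x2b) (pt_ndesc n1X) (pt_ndesc n2X).
have c4 : (count Q4 c' <= #|[set u | inr u \in beta t]|)%N.
  apply: (@count_inj_bound _ _ c' Q4 (wf c' t) _ Uc).
    by move=> x xc q; case: (ex4 x xc q) => u -> ub; exists u; rewrite ?inE.
  move=> x1 x2; rewrite !mem_filter => /andP[q1 x1c] /andP[q2 x2c] Hf.
  case: (eqVneq x1 x2) => // x12; exfalso.
  case: (ex4 x1 x1c q1) => u1 E1 _; rewrite E1 in Hf.
  have /and3P[_ r1 r1'] := wf_prop E1.
  have /and3P[_ r2 r2'] := wf_prop (esym Hf).
  case/and3P: q1 => n1X x1X n1b; case/and3P: q2 => n2X x2X n2b.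
  apply: (@no_double c' t x1 x2 u1 Hc Hmin' x1c x2c x12 r1 r1' r2 r2').
  by rewrite (pt_desc n1X n1b) (pt_desc n2X n2b) (pt_ndesc x1X) (pt_ndesc x2X) orbT.
apply: (leq_trans (leq_add (@count_or _ Q1 Q2 c') (@count_or _ Q3 Q4 c'))).
rewrite c2; exact: (@arith_fin _ _ _ _ _ _ c1 c3 c4 (@card_split _ _ (beta t))).
Qed.

Local Open Scope ring_scope.
Lemma main_sec (R : realType) (k : nat) (c : seq W) :
  (0 < k)%N ->
  (td_width beta)%:~R < 5 * Num.sqrt (2 * k%:R) :> R ->
  is_cycle G c ->
  exists c' : seq W,
    [/\ is_cycle G c', size c' = size c
      & forall t : N,
          (crossing_edges c' (derived_bag r root par beta t)
             (gamma root par (derived_bag r root par beta) t))%:R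
          <= 20 * Num.sqrt (2 * k%:R) :> R].
Proof.
move=> kpos Hw Hc.
have exP : exists n, [exists c' : (size c).-tuple W, is_cycle G c' && (psi phi c' == n)].
  by exists (psi phi c); apply/existsP; exists (in_tuple c); rewrite /= Hc eqxx.
case: (ex_minnP exP) => m /existsP[c' /andP[Hc' /eqP Em]] Hmin.
exists c'; split => //; first by rewrite size_tuple.
move=> t.
have Hb : (crossing_edges c' (dbag t) (gamma root par dbag t) <= 2 * #|beta t|)%N.
  apply: (@count_bound c c' t Hc' (size_tuple c')) => c2 H1 H2; rewrite Em; apply: Hmin.
  apply/existsP; exists (@Tuple _ _ c2 (introT eqP H2)); by rewrite /= H1 eqxx.
have HM : (#|beta t| <= \max_(s : N) #|beta s|)%N := @leq_bigmax _ (fun s => #|beta s|) t.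
move: Hw; rewrite /td_width intrB /=.
set M := (\max_(s : N) #|beta s|)%N in HM *.
set q := Num.sqrt _.
have q1 : 1 <= q.
  have h : (1 <= 2 * k%:R :> R) by rewrite -natrM ler1n muln_gt0 kpos.
  by move: (ler_wsqrtr h); rewrite sqrtr1.
move=> Hw.
have Hc2 : (crossing_edges c' (dbag t) (gamma root par dbag t))%:R <= 2 * (M%:R : R).
  by rewrite -natrM ler_nat (leq_trans Hb) // leq_mul2l HM orbT.
rewrite -!pmulrn in Hw.
set X := (crossing_edges _ _ _)%:R in Hc2 *.
have HM0 : (M%:R : R) = M%:R by [].
move: Hc2 Hw q1; rewrite /=; move: X (M%:R : R) q => a b q'.
rewrite [1 *+ 1]/= => h1 h2 h3; lra.
Qed.
End Main.

Local Open Scope ring_scope.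

Theorem lemma25 (R : realType) (W U N : finType) (G : rel W) (r : W -> U -> bool)
    (k : nat) (root : N) (par : N -> N) (beta : N -> {set (W + U)%type})
    (c : seq W) :
  simple_graph G ->
  is_half_square_of G r ->
  planar R (bipE r) ->
  (0 < k)%N ->
  nice_td (bipE r) root par beta ->
  (td_width beta)%:~R < 5 * Num.sqrt (2 * k%:R) :> R ->
  is_cycle G c ->
  exists c' : seq W,
    [/\ is_cycle G c', size c' = size c
      & forall t : N,
          (crossing_edges c' (derived_bag r root par beta t)
             (gamma root par (derived_bag r root par beta) t))%:R
          <= 20 * Num.sqrt (2 * k%:R) :> R].
Proof.
move=> [Gsym Girr] Hhs _ kpos [Htd _ _] Hw Hc.
exact: (@main_sec W U N G r root par beta Gsym Hhs Htd R k c kpos Hw Hc).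
Qed.
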